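(* Let $Q\in\mathbb{R}^{n\times n}$ be symmetric positive definite, $A\in\mathbb{R}^{m\times n}$, $b\in\mathbb{R}^m$, $c\in\mathbb{R}^n$, and suppose the problem $P(Q,A,b,c)$: $\min_{x\in\mathbb{R}^n}\frac12 x^\intercal Qx+c^\intercal x$ s.t. $Ax\preceq b$ is feasible, with optimal solution $x^\ast$. Let $\mu^\ast$ be an optimal solution of the dual problem $\max_{\mu\succeq 0} g(\mu)$, where $g(\mu)=-\frac12(A^\intercal\mu+c)^\intercal Q^{-1}(A^\intercal\mu+c)-\mu^\intercal b$, and let $t:=\operatorname{sign}(\mu^\ast+\nabla g(\mu^\ast))\in\{+1,-1,0\}^m$ (componentwise), where $\nabla g(\mu)=-AQ^{-1}(A^\intercal\mu+c)-b$. Suppose an adversary (the target node) knows $A$, $x^\ast$ and $t$. Then $b$ cannot be uniquely retrieved by the adversary — i.e., there exist $b'\in\mathbb{R}^m$ with $b'\neq b$, a symmetric positive definite $Q'\in\mathbb{R}^{n\times n}$, $c'\in\mathbb{R}^n$, and an optimal solution $\mu'$ of the dual of $P(Q',A,b',c')$ (dual function $g'$ defined as $g$ with $Q',b',c'$ in place of $Q,b,c$) such that $x^\ast$ is the optimal solution of $P(Q',A,b',c')$ and $\operatorname{sign}(\mu'+\nabla g'(\mu'))=t$ — if and only if $t_i<0$ for some $i\in\{1,\dots,m\}$.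
   Context: Vector inequalities $\preceq,\succeq$ are element-wise. The paper's notion of non-unique retrieval: a private input cannot be uniquely retrieved by an adversary if there are at least two values of it, each consistent (together with some values of the other data unknown to the adversary) with everything the adversary knows; the claim makes this explicit for the knowledge $(A,x^\ast,t)$. *)

(* Defs.v *)
From HB Require Import structures.
From mathcomp Require Import all_boot all_order all_algebra.
From mathcomp Require Import reals.
Set Implicit Arguments. Unset Strict Implicit. Unset Printing Implicit Defensive.
Import Order.TTheory GRing.Theory Num.Theory.
Local Open Scope ring_scope.

Section QP.
Variable R : realType.

Definition symmetric_mx n (Q : 'M[R]_n) : Prop := Q^T = Q.

Definition posdef_mx n (Q : 'M[R]_n) : Prop :=
  forall x : 'cV[R]_n, x != 0 -> 0 < (x^T *m Q *m x) 0 0.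

Definition qp_obj n (Q : 'M[R]_n) (c x : 'cV[R]_n) : R :=
  2^-1 * (x^T *m Q *m x) 0 0 + (c^T *m x) 0 0.

Definition qp_feasible m n (A : 'M[R]_(m, n)) (b : 'cV[R]_m) (x : 'cV[R]_n) : Prop :=
  forall i, (A *m x) i 0 <= b i 0.

Definition qp_optimal m n (Q : 'M[R]_n) (A : 'M[R]_(m, n)) (b : 'cV[R]_m)
    (c : 'cV[R]_n) (x : 'cV[R]_n) : Prop :=
  qp_feasible A b x /\
  forall y, qp_feasible A b y -> qp_obj Q c x <= qp_obj Q c y.

Definition dual_g m n (Q : 'M[R]_n) (A : 'M[R]_(m, n)) (b : 'cV[R]_m)
    (c : 'cV[R]_n) (mu : 'cV[R]_m) : R :=
  - (2^-1 * ((A^T *m mu + c)^T *m invmx Q *m (A^T *m mu + c)) 0 0)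
  - (mu^T *m b) 0 0.

Definition grad_g m n (Q : 'M[R]_n) (A : 'M[R]_(m, n)) (b : 'cV[R]_m)
    (c : 'cV[R]_n) (mu : 'cV[R]_m) : 'cV[R]_m :=
  - (A *m invmx Q *m (A^T *m mu + c)) - b.

Definition nonneg_vec m (mu : 'cV[R]_m) : Prop := forall i, 0 <= mu i 0.

Definition dual_optimal m n (Q : 'M[R]_n) (A : 'M[R]_(m, n)) (b : 'cV[R]_m)
    (c : 'cV[R]_n) (mu : 'cV[R]_m) : Prop :=
  nonneg_vec mu /\
  forall nu, nonneg_vec nu -> dual_g Q A b c nu <= dual_g Q A b c mu.

Definition sign_vec m (v : 'cV[R]_m) : 'cV[R]_m := map_mx (@Num.sg R) v.

End QP.

(* Main.v *)
Require Import Defs.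
From HB Require Import structures.
From mathcomp Require Import all_boot all_order all_algebra.
From mathcomp Require Import reals.
From mathcomp Require Import ring lra.
Import Order.TTheory GRing.Theory Num.Theory.
Local Open Scope ring_scope.
Set Implicit Arguments. Unset Strict Implicit. Unset Printing Implicit Defensive.

Section Aux.
Variable R : realType.

Definition dot k (u v : 'cV[R]_k) : R := (u^T *m v) 0 0.

Lemma dotE k (u v : 'cV[R]_k) : dot u v = \sum_j u j 0 * v j 0.
Proof. by rewrite /dot mxE; apply: eq_bigr => j _; rewrite mxE. Qed.

Lemma dotC k (u v : 'cV[R]_k) : dot u v = dot v u.
Proof. rewrite !dotE; apply: eq_bigr => j _; exact: mulrC. Qed.

Lemma dotDl k (u w v : 'cV[R]_k) : dot (u + w) v = dot u v + dot w v.
Proof. rewrite !dotE -big_split; apply: eq_bigr => j _; by rewrite !mxE mulrDl. Qed.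

Lemma dotDr k (u w v : 'cV[R]_k) : dot v (u + w) = dot v u + dot v w.
Proof. by rewrite dotC dotDl !(dotC v). Qed.

Lemma dotZl k a (u v : 'cV[R]_k) : dot (a *: u) v = a * dot u v.
Proof. rewrite !dotE mulr_sumr; apply: eq_bigr => j _; rewrite !mxE; ring. Qed.

Lemma dotZr k a (u v : 'cV[R]_k) : dot v (a *: u) = a * dot v u.
Proof. by rewrite dotC dotZl dotC. Qed.

Lemma dotNl k (u v : 'cV[R]_k) : dot (- u) v = - dot u v.
Proof. by rewrite -scaleN1r dotZl mulN1r. Qed.

Lemma dotNr k (u v : 'cV[R]_k) : dot v (- u) = - dot v u.
Proof. by rewrite dotC dotNl dotC. Qed.

Lemma dotBl k (u w v : 'cV[R]_k) : dot (u - w) v = dot u v - dot w v.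
Proof. by rewrite dotDl dotNl. Qed.

Lemma dotBr k (u w v : 'cV[R]_k) : dot v (u - w) = dot v u - dot v w.
Proof. by rewrite dotDr dotNr. Qed.

Lemma dotM k l (u : 'cV[R]_k) (M : 'M[R]_(k, l)) (w : 'cV[R]_l) :
  dot u (M *m w) = dot (M^T *m u) w.
Proof. by rewrite /dot trmx_mul trmxK mulmxA. Qed.

Lemma dote k (i : 'I_k) (v : 'cV[R]_k) : dot (delta_mx i 0) v = v i 0.
Proof.
rewrite dotE (bigD1 i) //= big1 ?addr0; first by rewrite mxE !eqxx mul1r.
by move=> j /negbTE ji; rewrite mxE ji mul0r.
Qed.

Lemma quadE n (Q : 'M[R]_n) (x : 'cV[R]_n) : (x^T *m Q *m x) 0 0 = dot x (Q *m x).
Proof. by rewrite /dot mulmxA. Qed.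

Lemma posdef_ge0 n (Q : 'M[R]_n) (x : 'cV[R]_n) : posdef_mx Q -> 0 <= dot x (Q *m x).
Proof.
move=> H; have [->|nz] := eqVneq x 0.
  by rewrite mulmx0 dotE big1 // => j _; rewrite mxE mulr0.
by rewrite -quadE; apply/ltW/H.
Qed.

Lemma posdef_unit n (Q : 'M[R]_n) : symmetric_mx Q -> posdef_mx Q -> Q \in unitmx.
Proof.
move=> S H; rewrite -row_free_unit -kermx_eq0; apply/eqP/row_matrixP => i.
rewrite row0; set u := row i (kermx Q).
have hu : u *m Q = 0 by rewrite /u -row_mul mulmx_ker row0.
apply/eqP; apply: contraT => nz.
have nz' : u^T != 0 by apply: contra nz => /eqP h; rewrite -(trmxK u) h trmx0.
have := H _ nz'.
have -> : u^T^T *m Q *m u^T = 0.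
  by rewrite trmxK hu mul0mx.
by rewrite mxE ltxx.
Qed.

Lemma inv_sym n (Q : 'M[R]_n) : symmetric_mx Q -> (invmx Q)^T = invmx Q.
Proof. by move=> S; rewrite trmx_inv S. Qed.


Definition xof m n (Q : 'M[R]_n) (A : 'M[R]_(m, n)) (c : 'cV[R]_n) (mu : 'cV[R]_m) :=
  - (invmx Q *m (A^T *m mu + c)).

Lemma grad_xof m n (Q : 'M[R]_n) (A : 'M[R]_(m, n)) b c mu :
  grad_g Q A b c mu = A *m xof Q A c mu - b.
Proof. by rewrite /grad_g /xof mulmxN mulmxA. Qed.

Lemma g_step m n (Q : 'M[R]_n) (A : 'M[R]_(m, n)) b c mu i s :
  symmetric_mx Q ->
  dual_g Q A b c (mu + s *: delta_mx i 0) =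
  dual_g Q A b c mu + s * grad_g Q A b c mu i 0
  - 2^-1 * s^2 * dot (A^T *m delta_mx i 0) (invmx Q *m (A^T *m delta_mx i 0)).
Proof.
move=> S; rewrite /dual_g !quadE.
set P := invmx Q; set e : 'cV_m := delta_mx i 0; set w := A^T *m e.
set v := A^T *m mu + c.
have -> : A^T *m (mu + s *: e) + c = v + s *: w.
  by rewrite /v /w mulmxDr -scalemxAr addrAC.
have Pw : dot v (P *m w) = dot w (P *m v).
  by rewrite dotM inv_sym // dotC.
have -> : grad_g Q A b c mu i 0 = - dot w (P *m v) - b i 0.
  rewrite -dotNr /w -dotM dote grad_xof /xof -/P -/v [LHS]mxE.
  by rewrite [(- b) i 0]mxE.
have -> : ((mu + s *: e)^T *m b) 0 0 = (mu^T *m b) 0 0 + s * b i 0.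
  by rewrite -[LHS]/(dot _ _) dotDl dotZl dote.
clearbody v w.
rewrite !(mulmxDr, dotDl, dotDr, dotZl, dotZr).
have -> : P *m (s *: w) = s *: (P *m w) by rewrite scalemxAr.
rewrite !dotZr Pw.
lra.
Qed.


Lemma small_le0 (a x K : R) : 0 < a -> (forall s, 0 < s -> s <= a -> x <= s * K) -> x <= 0.
Proof.
move=> a0 H; rewrite leNgt; apply/negP => x0.
set s := Num.min a (x / (`|K| + 1)).
have K1 : 0 < `|K| + 1 by rewrite ltr_wpDl.
have s0 : 0 < s by rewrite lt_min a0 divr_gt0.
have sa : s <= a by rewrite ge_min lexx.
have hx := H s s0 sa.
have sx : s <= x / (`|K| + 1) by rewrite ge_min lexx orbT.
have : s * K <= s * `|K| by apply: ler_wpM2l; [exact: ltW | exact: ler_norm].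
have : s * (`|K| + 1) <= x by rewrite -ler_pdivlMr.
rewrite mulrDr mulr1; lra.
Qed.

Lemma KKT m n (Q : 'M[R]_n) (A : 'M[R]_(m, n)) b c mu i :
  symmetric_mx Q -> dual_optimal Q A b c mu ->
  grad_g Q A b c mu i 0 <= 0 /\ mu i 0 * grad_g Q A b c mu i 0 = 0.
Proof.
move=> S [mu0 opt].
set gr := grad_g Q A b c mu i 0.
set k := dot (A^T *m delta_mx i 0) (invmx Q *m (A^T *m delta_mx i 0)).
have key : forall s, - mu i 0 <= s -> s * gr - 2^-1 * s^2 * k <= 0.
  move=> s hs.
  have nn : nonneg_vec (mu + s *: delta_mx i 0).
    move=> j; rewrite !mxE; have [->|_] := eqVneq j i.
      by rewrite eqxx mulr1; lra.
    by rewrite mulr0 addr0.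
  have := opt _ nn; rewrite g_step // -/gr -/k; lra.
have g0 : gr <= 0.
  apply: (@small_le0 1 _ (2^-1 * k)) => // s s0 s1.
  have := key s; rewrite (_ : - mu i 0 <= s); last by move: (mu0 i); lra.
  move/(_ isT) => h; nra.
split=> //.
have [m0|] := eqVneq (mu i 0) 0; first by rewrite m0 mul0r.
move=> mne; have mpos : 0 < mu i 0 by rewrite lt_def mne mu0.
have : - gr <= 0.
  apply: (@small_le0 (mu i 0) _ (2^-1 * k)) => // s s0 s1.
  have := key (- s); rewrite (_ : - mu i 0 <= - s); last by lra.
  move/(_ isT) => h; nra.
move=> h; have -> : gr = 0 by lra.
by rewrite mulr0.
Qed.


Lemma objE n (Q : 'M[R]_n) c y : qp_obj Q c y = 2^-1 * dot y (Q *m y) + dot c y.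
Proof. by rewrite /qp_obj quadE. Qed.

Lemma F1 m n (Q : 'M[R]_n) (A : 'M[R]_(m, n)) c mu y :
  symmetric_mx Q -> posdef_mx Q ->
  qp_obj Q c (xof Q A c mu) + dot mu (A *m xof Q A c mu)
  <= qp_obj Q c y + dot mu (A *m y).
Proof.
move=> S H; set x := xof Q A c mu.
have U := posdef_unit S H.
set z := Q *m x.
have hz : A^T *m mu + c = - z.
  by rewrite /z /x /xof mulmxN mulmxA mulmxV // mul1mx opprK.
have ey : dot c y + dot mu (A *m y) = - dot z y.
  by rewrite dotM -dotNl -hz dotDl addrC.
have ex : dot c x + dot mu (A *m x) = - dot z x.
  by rewrite dotM -dotNl -hz dotDl addrC.
have := posdef_ge0 (y - x) H.
rewrite mulmxBr !(dotBl, dotBr) -/z.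
have -> : dot x (Q *m y) = dot z y by rewrite dotM S.
rewrite [dot y z]dotC [dot x z]dotC => h.
rewrite !objE -/z [dot x z]dotC; lra.
Qed.

Lemma opt_x m n (Q : 'M[R]_n) (A : 'M[R]_(m, n)) b c mu :
  symmetric_mx Q -> posdef_mx Q -> nonneg_vec mu ->
  qp_feasible A b (xof Q A c mu) ->
  (forall j, mu j 0 * (A *m xof Q A c mu - b) j 0 = 0) ->
  qp_optimal Q A b c (xof Q A c mu).
Proof.
move=> S H mu0 fe cs; split=> // y fy.
have h1 := F1 A c mu y S H.
have e1 : dot mu (A *m xof Q A c mu - b) = 0.
  by rewrite dotE big1 // => j _; rewrite cs.
have e2 : dot mu (A *m y - b) <= 0.
  rewrite dotE -oppr_ge0 -sumrN; apply: sumr_ge0 => j _.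
  have := fy j; have := mu0 j; rewrite !mxE.
move=> ? ?; nra.
move: e1 e2; rewrite !dotBr; lra.
Qed.

Lemma uniq_opt m n (Q : 'M[R]_n) (A : 'M[R]_(m, n)) b c x1 x2 :
  symmetric_mx Q -> posdef_mx Q ->
  qp_optimal Q A b c x1 -> qp_optimal Q A b c x2 -> x1 = x2.
Proof.
move=> S H [f1 o1] [f2 o2].
apply/eqP; apply: contraT => ne.
have nd : x1 - x2 != 0 by rewrite subr_eq0.
have pd := H _ nd; rewrite quadE in pd.
set z := 2^-1 *: (x1 + x2).
have fz : qp_feasible A b z.
  move=> i; rewrite /z -scalemxAr mulmxDr !mxE.
  have h1 := f1 i; have h2 := f2 i; rewrite !mxE in h1 h2; lra.
have := o1 z fz; have := o1 x2 f2; have := o2 x1 f1.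
have Qz : Q *m z = 2^-1 *: (Q *m x1 + Q *m x2) by rewrite -scalemxAr mulmxDr.
rewrite !objE Qz /z.
rewrite !(dotZl, dotZr, dotDl, dotDr).
move: pd; rewrite mulmxBr !(dotBl, dotBr).
have -> : dot x2 (Q *m x1) = dot x1 (Q *m x2) by rewrite dotM S dotC.
move=> h0 h1 h2 h3; exfalso; clear -h0 h1 h2 h3; lra.
Qed.


Lemma gradE m n (Q : 'M[R]_n) (A : 'M[R]_(m, n)) b c mu j :
  grad_g Q A b c mu j 0 = (A *m xof Q A c mu) j 0 - b j 0.
Proof. by rewrite grad_xof !mxE. Qed.

Lemma xs_eq m n (Q : 'M[R]_n) (A : 'M[R]_(m, n)) b c xs mu :
  symmetric_mx Q -> posdef_mx Q -> qp_optimal Q A b c xs ->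
  dual_optimal Q A b c mu -> xs = xof Q A c mu.
Proof.
move=> S H o d; apply: (uniq_opt S H o); apply: opt_x => //.
- by case: d.
- move=> j; have [h _] := KKT j S d; move: h; rewrite gradE; lra.
- move=> j; have [_ h] := KKT j S d; move: h.
  by rewrite gradE -gradE grad_xof.
Qed.

Lemma active m n (Q : 'M[R]_n) (A : 'M[R]_(m, n)) b c xs mu j :
  symmetric_mx Q -> posdef_mx Q -> qp_optimal Q A b c xs ->
  dual_optimal Q A b c mu ->
  0 <= Num.sg ((mu + grad_g Q A b c mu) j 0) -> (A *m xs) j 0 = b j 0.
Proof.
move=> S H o d; rewrite sgr_ge0 mxE => hs.
have [h1 h2] := KKT j S d.
have m0 : 0 <= mu j 0 by case: d => nn _; exact: nn.
have : grad_g Q A b c mu j 0 = 0 by nra.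
by rewrite gradE -(xs_eq S H o d); lra.
Qed.

Lemma g_shift m n (Q : 'M[R]_n) (A : 'M[R]_(m, n)) b c nu (i : 'I_m) :
  dual_g Q A (b + delta_mx i 0) c nu = dual_g Q A b c nu - nu i 0.
Proof.
rewrite /dual_g.
change ((nu^T *m (b + delta_mx i 0)) 0 0) with (dot nu (b + delta_mx i 0)).
change ((nu^T *m b) 0 0) with (dot nu b).
rewrite dotDr [dot nu (delta_mx i 0)]dotC dote; ring.
Qed.

End Aux.

Theorem proposition5 (R : realType) (m n : nat)
  (Q : 'M[R]_n) (A : 'M[R]_(m, n)) (b : 'cV[R]_m) (c : 'cV[R]_n)
  (xs : 'cV[R]_n) (mus : 'cV[R]_m) :
  symmetric_mx Q -> posdef_mx Q ->
  qp_optimal Q A b c xs ->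
  dual_optimal Q A b c mus ->
  let t := sign_vec (mus + grad_g Q A b c mus) in
  (exists (b' : 'cV[R]_m) (Q' : 'M[R]_n) (c' : 'cV[R]_n) (mu' : 'cV[R]_m),
      b' != b /\ symmetric_mx Q' /\ posdef_mx Q' /\
      dual_optimal Q' A b' c' mu' /\
      qp_optimal Q' A b' c' xs /\
      sign_vec (mu' + grad_g Q' A b' c' mu') = t)
  <-> (exists i : 'I_m, t i 0 < 0).
Proof.
move=> S H opt dopt t; split.
- case=> b' [Q' [c' [mu' [nb [S' [H' [dopt' [opt' sg]]]]]]]].
  case: (boolP [exists i, t i 0 < 0]) => [/existsP //|/existsPn hn].
  exfalso; apply: (negP nb); apply/eqP/matrixP => j k; rewrite (ord1 k).
  have tj : 0 <= t j 0 by rewrite leNgt; exact: hn.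
  rewrite -(active S' H' opt' dopt'); last first.
    by have := congr1 (fun M : 'M[R]_(m, 1) => M j 0) sg; rewrite /= mxE => ->.
  rewrite (active S H opt dopt) //; by move: tj; rewrite /t mxE.
- case=> i ti.
  have neg : (mus + grad_g Q A b c mus) i 0 < 0 by move: ti; rewrite /t mxE sgr_lt0.
  have [h1 h2] := KKT i S dopt.
  have m0 : 0 <= mus i 0 by case: dopt => nn _; exact: nn.
  move: neg; rewrite mxE => neg.
  have mi0 : mus i 0 = 0 by nra.
  have gi : grad_g Q A b c mus i 0 < 0 by lra.
  exists (b + delta_mx i 0), Q, c, mus.
  have gsh : grad_g Q A (b + delta_mx i 0) c mus = grad_g Q A b c mus - delta_mx i 0.
    by rewrite /grad_g opprD addrA.
  split.
    apply/eqP => /matrixP /(_ i 0); rewrite !mxE !eqxx /= => h; move: h; lra.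
  split=> //; split=> //; split.
    split; first by case: dopt.
    move=> nu nn; rewrite !g_shift mi0; case: dopt => _ o; have := o nu nn.
    have := nn i; lra.
  split.
    rewrite (xs_eq S H opt dopt); apply: opt_x => //.
    + by case: dopt.
    + move=> j; have [h _] := KKT j S dopt; move: h; rewrite gradE !mxE.
      case: (j == i); rewrite /=; lra.
    + move=> j; have [_ h] := KKT j S dopt; move: h; rewrite gradE !mxE.
      have [->|ne] := eqVneq j i; first by rewrite mi0 !mul0r.
      by rewrite /= addr0.
  rewrite gsh /t; set G := grad_g Q A b c mus in neg gi h1 h2 *.
  clearbody G.
  apply/matrixP => j k; rewrite (ord1 k) !mxE.
  have [->|ne] := eqVneq j i.
    by rewrite !eqxx /= !ltr0_sg //; lra.
  by rewrite /= subr0 .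
Qed.
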